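(* Let $D=\mathrm{diag}(1,-1,1,-1,\ldots)=(1,-x)$, $\mathbb{F}^{\rm S}=(1,x(1+x))$, $\mathbb{L}^{\rm S}=(1+2x,x(1+x))$, and write $D(\mathbb{F}^{\rm S})^{-1}D=[r_{ij}]_{i,j\ge0}$ and $D(\mathbb{L}^{\rm S})^{-1}D=[q_{ij}]_{i,j\ge0}$. Then for all positive integers $i,j$ with $i\ge j$: (a) $r_{i,i-j+1}=r_{i-1,i-1}+r_{i-1,i-2}+\cdots+r_{i-1,i-j}$; (b) $q_{i,i-j+1}=q_{i-1,i-1}+q_{i-1,i-2}+\cdots+q_{i-1,i-j}$.
   Context: All matrices are infinite with rows and columns indexed by $0,1,2,\ldots$. For formal power series $g(x)=g_0+g_1x+\cdots$ with $g_0\ne0$ and $f(x)=f_1x+f_2x^2+\cdots$ with $f_1\ne0$, $(g(x),f(x))$ denotes the (Riordan) infinite lower triangular matrix whose $j$-th column has generating function $g(x)f(x)^j$. These matrices form a group under matrix multiplication with $(g,f)(h,l)=(g\cdot h(f),l(f))$. *)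

(* Defs.v *)
From mathcomp Require Import all_boot all_order all_algebra.
Set Implicit Arguments. Unset Strict Implicit. Unset Printing Implicit Defensive.
Import GRing.Theory.
Local Open Scope ring_scope.

Definition fps := nat -> int.

Definition fps_mul (a b : fps) : fps :=
  fun n => \sum_(k < n.+1) a k * b (n - k)%N.

Definition fps_one : fps := fun n => (n == 0)%:R.

Definition fps_pow (f : fps) (j : nat) : fps := iter j (fps_mul f) fps_one.

Definition imat := nat -> nat -> int.

Definition riordan (g f : fps) : imat := fun i j => fps_mul g (fps_pow f j) i.

Definition lower_tri (A : imat) : Prop := forall i j, (i < j)%N -> A i j = 0.

(* Product of infinite matrices; the sum over k <= i is the full (finite)
   product whenever the left factor is lower triangular, which is the case
   for every use below. *)
Definition lmul (A B : imat) : imat := fun i j => \sum_(k < i.+1) A i k * B k j.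

Definition imat1 : imat := fun i j => (i == j)%:R.

Definition ps_x_x2 : fps := fun n => ((n == 1)%N || (n == 2)%N)%:R.
Definition ps_1_2x : fps := fun n => if n == 0%N then 1 else if n == 1%N then 2 else 0.
Definition ps_mx : fps := fun n => - (n == 1)%:R.

Definition Dmat : imat := riordan fps_one ps_mx.
Definition FS : imat := riordan fps_one ps_x_x2.
Definition LS : imat := riordan ps_1_2x ps_x_x2.

Definition is_inverse (A R : imat) : Prop :=
  lower_tri R /\ lmul A R = imat1 /\ lmul R A = imat1.

(* Main.v *)
Require Import Defs.
From mathcomp Require Import all_boot all_order all_algebra.
From Stdlib Require Import FunctionalExtensionality.
From mathcomp Require Import zify ring.
Import GRing.Theory.
Local Open Scope ring_scope.

Definition shift (q : fps) : fps := fun n => if n is n'.+1 then q n' else 0.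

Lemma mul1f q : fps_mul fps_one q = q.
Proof.
apply: functional_extensionality => n.
rewrite /fps_mul big_ord_recl /= /fps_one /= mul1r subn0 big1 ?addr0 // => k _.
by rewrite mul0r.
Qed.

Lemma mulshiftl a q : fps_mul (shift a) q = shift (fps_mul a q).
Proof.
apply: functional_extensionality => n.
rewrite /fps_mul big_ord_recl /= mul0r add0r.
case: n => [|n] /=; first by rewrite big_ord0.
by apply: eq_bigr => k _; rewrite /bump /= add1n subSS.
Qed.

Lemma mulshiftr a q : fps_mul a (shift q) = shift (fps_mul a q).
Proof.
apply: functional_extensionality => n.
rewrite /fps_mul big_ord_recr /= subnn mulr0 addr0.
case: n => [|n] /=; first by rewrite big_ord0.
by apply: eq_bigr => k _; rewrite subSn ?leq_ord.
Qed.

Lemma mulDr a p q : fps_mul a (fun n => p n + q n) = fun n => fps_mul a p n + fps_mul a q n.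
Proof.
apply: functional_extensionality => n.
by rewrite /fps_mul -big_split /=; apply: eq_bigr => k _; rewrite mulrDr.
Qed.

Lemma mulDl a p q : fps_mul (fun n => p n + q n) a = fun n => fps_mul p a n + fps_mul q a n.
Proof.
apply: functional_extensionality => n.
by rewrite /fps_mul -big_split /=; apply: eq_bigr => k _; rewrite mulrDl.
Qed.

Lemma xx2E : ps_x_x2 = fun n => shift fps_one n + shift (shift fps_one) n.
Proof.
apply: functional_extensionality => [[|[|[|n]]]] //=.
Qed.

Lemma mul_xx2 q : fps_mul ps_x_x2 q = fun n => shift q n + shift (shift q) n.
Proof. by rewrite xx2E mulDl !mulshiftl mul1f. Qed.

Lemma mul_mx q n : fps_mul ps_mx q n = - shift q n.
Proof.
rewrite /fps_mul big_ord_recl /ps_mx /= mulNr mul0r oppr0 add0r.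
case: n => [|n] /=; first by rewrite big_ord0 oppr0.
rewrite big_ord_recl /= mulNr mul1r big1 ?addr0; first by rewrite /bump /= subSS subn0.
by move=> k _; rewrite mulNr mul0r oppr0.
Qed.

Lemma Dmat_E k j : Dmat k j = (-1) ^+ j * (k == j)%:R.
Proof.
rewrite /Dmat /riordan mul1f.
elim: j k => [|j IH] k /=; first by rewrite /fps_one expr0 mul1r.
rewrite -/(fps_pow ps_mx j) mul_mx /shift; case: k => [|k].
  by rewrite oppr0 mulr0.
by rewrite IH exprS eqSS mulN1r mulNr.
Qed.

Lemma riordan_col g j k :
  riordan g ps_x_x2 k j.+1 = shift (fun k => riordan g ps_x_x2 k j) k +
                             shift (shift (fun k => riordan g ps_x_x2 k j)) k.
Proof.
rewrite /riordan /fps_pow /= -/(fps_pow ps_x_x2 j) mul_xx2 mulDr !mulshiftr //.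
Qed.

Lemma riordan_lt g j k : (k < j)%N -> riordan g ps_x_x2 k j = 0.
Proof.
elim: j k => [|j IH] k //= Hk.
rewrite riordan_col /shift; case: k Hk => [|k] //= Hk.
rewrite IH //; case: k Hk => [|k] //= Hk; rewrite IH ?addr0 //.
by lia.
Qed.

Lemma sum_widen n1 n2 (F : nat -> int) : (n1 <= n2)%N ->
  (forall k, (n1 <= k)%N -> F k = 0) -> \sum_(k < n1) F k = \sum_(k < n2) F k.
Proof.
move=> H H0; rewrite (big_ord_widen n2 F H) big_mkcond; apply: eq_bigr => k _.
by case: ifP => // /negbT; rewrite -leqNgt => /H0 ->.
Qed.

Lemma sum_delta n m (F : nat -> int) :
  \sum_(l < n) F l * (nat_of_ord l == m)%:R = if (m < n)%N then F m else 0.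
Proof.
rewrite -(@big_ord1_eq int 0 +%R) [RHS]big_mkcond; apply: eq_bigr => l _.
by case: eqP => _; rewrite ?mulr1 ?mulr0.
Qed.

Lemma key (B M : imat) : lower_tri B -> lower_tri M ->
  lmul B M = imat1 -> lmul M B = imat1 ->
  (forall k j, M k j.+1 = shift (fun k => M k j) k + shift (shift (fun k => M k j)) k) ->
  forall i m, B i.+1 m.+1 + B i.+1 m.+2 = B i m.
Proof.
move=> LB LM HBM HMB Hcol.
pose E i m := B i.+1 m.+1 + B i.+1 m.+2 - B i m.
have EL : forall i m, (i < m)%N -> E i m = 0.
  by move=> i m Hm; rewrite /E !LB ?subrr ?addr0 //; lia.
have EM : forall i j, \sum_(m < i.+1) E i m * M m j = 0.
  move=> i j.
  have h3 : \sum_(m < i.+1) B i m * M m j = (i == j)%:R.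
    by have := congr1 (fun f => f i j) HBM; rewrite /lmul /imat1.
  have h1 : \sum_(k < i.+2) B i.+1 k * shift (fun k => M k j) k +
     \sum_(k < i.+2) B i.+1 k * shift (shift (fun k => M k j)) k =
     \sum_(m < i.+1) B i m * M m j.
    rewrite h3 -big_split /=.
    have := congr1 (fun f => f i.+1 j.+1) HBM; rewrite /lmul /imat1 /= eqSS => <-.
    by apply: eq_bigr => k _; rewrite Hcol mulrDr.
  under eq_bigr => k _ do rewrite /E !mulrBl mulrDl.
  rewrite sumrB big_split /=.
  rewrite -h1; apply/eqP; rewrite subr_eq0; apply/eqP; congr (_ + _).
    by rewrite [RHS]big_ord_recl /= mulr0 add0r.
  rewrite [RHS]big_ord_recl /= mulr0 add0r [RHS]big_ord_recl /= mulr0 add0r.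
  have -> : \sum_(i0 < i) B i.+1 (bump 0 (bump 0 i0)) * M (0 + i0)%N j =
            \sum_(i0 < i) B i.+1 i0.+2 * M i0 j.
    by apply: eq_bigr => k _; rewrite /bump /= !add1n add0n.
  symmetry; apply: (@sum_widen i i.+1 (fun k => B i.+1 k.+2 * M k j)) => // k Hk.
  by rewrite LB ?mul0r //; lia.
move=> i m.
suff : E i m = 0 by move/eqP; rewrite subr_eq0 => /eqP.
have -> : E i m = \sum_(l < i.+1) E i l * (nat_of_ord l == m)%:R.
  rewrite sum_delta; case: ltnP => // Hm; rewrite EL //.
have -> : \sum_(l < i.+1) E i l * (nat_of_ord l == m)%:R =
          \sum_(l < i.+1) E i l * \sum_(k < i.+1) M l k * B k m.
  apply: eq_bigr => l _; congr (_ * _).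
  have := congr1 (fun f => f (nat_of_ord l) m) HMB; rewrite /lmul /imat1 => <-.
  apply: (@sum_widen l.+1 i.+1 (fun k => M l k * B k m)); first exact: ltn_ord.
  by move=> k Hk; rewrite LM ?mul0r.
under eq_bigr => l _ do rewrite mulr_sumr.
rewrite exchange_big /= big1 // => k _.
rewrite (eq_bigr (fun l : 'I_i.+1 => E i l * M l k * B k m)); last by move=> l _; rewrite mulrA.
by rewrite -mulr_suml EM mul0r.
Qed.

Lemma rrE (B : imat) : lower_tri B -> forall i j,
  lmul Dmat (lmul B Dmat) i j = (-1) ^+ i * (B i j * (-1) ^+ j).
Proof.
move=> LB i j.
rewrite /lmul.
under eq_bigr => k _ do rewrite Dmat_E (eq_sym i) mulrC mulrA.
rewrite (sum_delta _ _ (fun k => (\sum_(k0 < k.+1) B k k0 * Dmat k0 j) * (-1) ^+ k)) ltnSn.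
rewrite mulrC; congr (_ * _).
under eq_bigr => k _ do rewrite Dmat_E mulrA.
rewrite (sum_delta _ _ (fun k => B i k * (-1) ^+ j)).
by case: ltnP => // Hj; rewrite LB ?mul0r.
Qed.

Lemma telescope (r : imat) :
  (forall i m, r i.+1 m.+1 = r i m + r i.+1 m.+2) ->
  (forall i m, (i < m)%N -> r i m = 0) ->
  forall i j, (0 < j)%N -> (j <= i)%N ->
  r i (i - j + 1)%N = \sum_(1 <= k < j.+1) r (i.-1) (i - k)%N.
Proof.
move=> H1 H2 [|i] j Hj Hji /=; first by lia.
have -> : (i.+1 - j + 1 = i.+2 - j)%N by lia.
elim: j Hj Hji => [|j IH] _ Hji.
  by rewrite big_geq // H2.
rewrite big_nat_recr //=.
case: j IH Hji => [|j] IH Hji.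
  by rewrite big_geq // add0r !subn1 /= H1 (H2 i.+1 i.+2) ?addr0.
rewrite -IH //; last by lia.
have -> : (i.+2 - j.+2 = (i - j.+1).+1)%N by lia.
have -> : (i.+2 - j.+1 = (i - j.+1).+2)%N by lia.
have -> : (i.+1 - j.+2 = (i - j.+1))%N by lia.
by rewrite H1 addrC.
Qed.

Lemma riordan_lt' g : lower_tri (riordan g ps_x_x2).
Proof. by move=> i j; apply: riordan_lt. Qed.

Lemma r_props (B M : imat) (g : fps) : M = riordan g ps_x_x2 ->
  is_inverse M B ->
  forall i j, (0 < j)%N -> (j <= i)%N ->
    let r := lmul Dmat (lmul B Dmat) in
    r i (i - j + 1)%N = \sum_(1 <= k < j.+1) r (i.-1) (i - k)%N.
Proof.
move=> -> [LB [HMB HBM]] i j Hj Hji r.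
apply: telescope => //.
  move=> i0 m; rewrite /r !rrE //.
  have K := @key B (riordan g ps_x_x2) LB (@riordan_lt' g) HBM HMB (fun k j => riordan_col g j k) i0 m.
  rewrite -K !exprS; ring.
by move=> i0 m Hm; rewrite /r rrE // LB ?mul0r ?mulr0.
Qed.

Theorem corollary3p3 (Finv Linv : imat) :
  is_inverse FS Finv -> is_inverse LS Linv ->
  forall i j : nat, (0 < j)%N -> (j <= i)%N ->
    let r := lmul Dmat (lmul Finv Dmat) in
    let q := lmul Dmat (lmul Linv Dmat) in
    r i (i - j + 1)%N = \sum_(1 <= k < j.+1) r (i.-1) (i - k)%N /\
    q i (i - j + 1)%N = \sum_(1 <= k < j.+1) q (i.-1) (i - k)%N.
Proof.
move=> HF HL i j Hj Hji r q; split.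
  exact: (@r_props Finv FS fps_one erefl HF).
exact: (@r_props Linv LS ps_1_2x erefl HL).
Qed.
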